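(* Let $C$ be a linear code of length $n$ over $B_k$ such that $C=\overline{\Psi}_k^{-1}(C_1,\dots,C_{2^k})$ for some linear codes $C_1,\dots,C_{2^k}$ of length $n$ over $\mathbb{F}_{p^r}$. Then $d_H(C)=\min_{1\le i\le 2^k}d_H(C_i)$.
   Context: Let $p$ be a prime, $r\ge 1$, $\mathbb{F}_{p^r}$ the field with $p^r$ elements, and for $k\ge1$ let $B_k=\mathbb{F}_{p^r}[v_1,\dots,v_k]/\langle v_i^2-v_i,\ v_iv_j-v_jv_i\rangle$. A linear code over $B_k$ is a $B_k$-submodule of $B_k^n$; a linear code over $\mathbb{F}_{p^r}$ is a subspace of $\mathbb{F}_{p^r}^n$. For $H\subseteq\{1,\dots,k\}$ put $v_H=\prod_{i\in H}v_i$ ($v_\emptyset=1$); every $a\in B_k$ is uniquely $a=\sum_{H}\alpha_Hv_H$ with $\alpha_H\in\mathbb{F}_{p^r}$. Fix an enumeration $H_1,\dots,H_{2^k}$ of the subsets of $\{1,\dots,k\}$ and define $\Psi_k:B_k\to\mathbb{F}_{p^r}^{2^k}$ by $\Psi_k(a)=\big(\sum_{H\subseteq H_1}\alpha_H,\dots,\sum_{H\subseteq H_{2^k}}\alpha_H\big)$. For subsets $C_1,\dots,C_{2^k}\subseteq\mathbb{F}_{p^r}^n$, $\overline{\Psi}_k^{-1}(C_1,\dots,C_{2^k})$ is the set of $(a_1,\dots,a_n)\in B_k^n$ such that for each $j$ the vector $(\Psi_k(a_1)_j,\dots,\Psi_k(a_n)_j)$ lies in $C_j$. The Hamming weight of a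 vector over a ring is its number of nonzero coordinates, and $d_H$ of a linear code is the minimum Hamming weight of its nonzero codewords (with $d_H(\{0\})=+\infty$). *)

(* Defs.v *)
From HB Require Import structures.
From mathcomp Require Import all_boot all_order all_algebra all_field.
Set Implicit Arguments. Unset Strict Implicit. Unset Printing Implicit Defensive.
Import GRing.Theory.
Local Open Scope ring_scope.

(* Elements of B_k = F[v_1..v_k]/<v_i^2 - v_i, v_i v_j - v_j v_i> are
   represented by their unique coefficient family (alpha_H)_{H subset {1..k}},
   a = sum_H alpha_H v_H, with v_H v_K = v_{H u K}. *)
Definition Bk (F : finFieldType) (k : nat) := {ffun {set 'I_k} -> F}.

Definition Bmul (F : finFieldType) (k : nat) (a b : Bk F k) : Bk F k :=
  [ffun H : {set 'I_k} =>
     \sum_(H1 : {set 'I_k}) \sum_(H2 : {set 'I_k} | H1 :|: H2 == H) a H1 * b H2].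

Definition BkVec (F : finFieldType) (k n : nat) := {ffun 'I_n -> Bk F k}.

Definition Bscale (F : finFieldType) (k n : nat) (a : Bk F k) (c : BkVec F k n)
  : BkVec F k n := [ffun i => Bmul a (c i)].

Definition is_Bk_linear_code (F : finFieldType) (k n : nat)
    (C : {set BkVec F k n}) : Prop :=
  [/\ (0 : BkVec F k n) \in C,
      (forall c d, c \in C -> d \in C -> c + d \in C) &
      (forall (a : Bk F k) c, c \in C -> Bscale a c \in C)].

Definition Psi (F : finFieldType) (k : nat) (a : Bk F k) (J : {set 'I_k}) : F :=
  \sum_(H : {set 'I_k} | H \subset J) a H.

Definition PsiBarInv (F : finFieldType) (k n : nat)
    (Cs : {set 'I_k} -> {vspace 'rV[F]_n}) : {set BkVec F k n} :=
  [set c : BkVec F k n |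
     [forall J : {set 'I_k}, (\row_(i < n) Psi (c i) J) \in Cs J]].

Definition wtF (F : finFieldType) (n : nat) (v : 'rV[F]_n) : nat :=
  #|[set i : 'I_n | v ord0 i != 0]|.
Definition wtB (F : finFieldType) (k n : nat) (c : BkVec F k n) : nat :=
  #|[set i : 'I_n | c i != 0]|.

(* minimum of w over A; None stands for +infinity (A empty) *)
Definition min_over (T : finType) (A : pred T) (w : T -> nat) : option nat :=
  if [pick x in A] is Some x0 then Some (w [arg min_(x < x0 in A) w x])
  else None.

(* minimum distance; None = +oo for the zero code *)
Definition dH_F (F : finFieldType) (n : nat) (C : {vspace 'rV[F]_n}) : option nat :=
  min_over [pred v : 'rV[F]_n | (v \in C) && (v != 0)] (@wtF F n).
Definition dH_B (F : finFieldType) (k n : nat) (C : {set BkVec F k n}) : option nat :=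
  min_over [pred c : BkVec F k n | (c \in C) && (c != 0)] (@wtB F k n).

Definition omin (x y : option nat) : option nat :=
  match x, y with
  | None, _ => y
  | _, None => x
  | Some a, Some b => Some (minn a b)
  end.

(* Main.v *)
Require Import Defs.
From HB Require Import structures.
From mathcomp Require Import all_boot all_order all_algebra all_field.
Set Implicit Arguments. Unset Strict Implicit. Unset Printing Implicit Defensive.
Import GRing.Theory.
Local Open Scope ring_scope.

Lemma ffun0E (I : finType) (M : nmodType) (i : I) : (0 : {ffun I -> M}) i = 0.
Proof. by rewrite ffunE. Qed.

Lemma Psi0 (F : finFieldType) k J : Psi (0 : Bk F k) J = 0.
Proof. by rewrite /Psi big1 // => H _; rewrite ffun0E. Qed.

Lemma Psi_inj (F : finFieldType) k (a b : Bk F k) :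
  (forall J, Psi a J = Psi b J) -> a = b.
Proof.
move=> E; apply/ffunP => H.
have [m Hm] := ubnP #|H|; elim: m H Hm => // m IH H Hm.
have e : \sum_(H' : {set 'I_k} | (H' \subset H) && (H' != H)) a H' =
         \sum_(H' : {set 'I_k} | (H' \subset H) && (H' != H)) b H'.
  apply: eq_bigr => H' /andP[sub ne]; apply: IH.
  have pr : H' \proper H by rewrite properEneq ne sub.
  by apply: leq_trans (proper_card pr) _.
move: (E H); rewrite /Psi (bigD1 H) ?subxx //= (bigD1 H (subxx H)) /= e.
exact: addIr.
Qed.

Definition ole (x y : option nat) : bool :=
  match y with None => true | Some b => match x with None => false | Some a => (a <= b)%N end end.

Lemma ole_trans y x z : ole x y -> ole y z -> ole x z.
Proof. by case: x => [a|]; case: y => [b|]; case: z => [c|] //=; apply: leq_trans. Qed.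

Lemma ole_anti x y : ole x y -> ole y x -> x = y.
Proof. by case: x => [a|]; case: y => [b|] //= h1 h2; rewrite (@anti_leq a b) ?h1 ?h2. Qed.

Lemma ominA : associative omin.
Proof. by case=> [a|] [b|] [c|] //=; rewrite minnA. Qed.
Lemma ominC : commutative omin.
Proof. by case=> [a|] [b|] //=; rewrite minnC. Qed.
Lemma omin0l : left_id None omin.
Proof. by case. Qed.
HB.instance Definition _ := Monoid.isComLaw.Build (option nat) None omin ominA ominC omin0l.

Lemma big_omin_le (I : finType) (f : I -> option nat) J :
  ole (\big[omin/None]_i f i) (f J).
Proof.
rewrite (bigD1 J) //=; case: (f J) => [a|] //; case: (\big[omin/None]_(i | i != J) f i) => //= b.
exact: geq_minl.
Qed.

Lemma big_omin_attained (I : finType) (f : I -> option nat) :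
  (\big[omin/None]_i f i == None) || [exists J, \big[omin/None]_i f i == f J].
Proof.
apply: (big_ind (fun x => (x == None) || [exists J, x == f J])) => //.
  move=> x y; case: x => [a|]; case: y => [b|] //= Ha Hb.
  by rewrite /minn; case: ifP.
by move=> i _; apply/orP; right; apply/existsP; exists i.
Qed.

Lemma min_over_lb (T : finType) (A : pred T) w x :
  x \in A -> exists m, min_over A w = Some m /\ (m <= w x)%N.
Proof.
move=> xA; rewrite /min_over; case: pickP => [x0 Hx0|H]; last by rewrite H in xA.
eexists; split; first reflexivity.
by case: arg_minnP => // y _ /(_ x xA).
Qed.

Lemma min_over_Some (T : finType) (A : pred T) w m :
  min_over A w = Some m -> exists x, x \in A /\ w x = m.
Proof.
rewrite /min_over; case: pickP => [x0 Hx0|H] // [<-].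
by case: arg_minnP => // y yA _; exists y.
Qed.

Theorem lemma5p5 (p r : nat) (F : finFieldType) (k n : nat)
  (hp : prime p) (hr : (0 < r)%N) (hF : #|F| = (p ^ r)%N) (hk : (1 <= k)%N)
  (C : {set BkVec F k n}) (Cs : {set 'I_k} -> {vspace 'rV[F]_n}) :
  is_Bk_linear_code C ->
  C = PsiBarInv Cs ->
  dH_B C = \big[omin/None]_(J : {set 'I_k}) dH_F (Cs J).
Proof.
move=> _ ->.
pose PsiF (a : Bk F k) : Bk F k := [ffun J => Psi a J].
have injP : injective PsiF.
  move=> a b e; apply: Psi_inj => J.
  by have := congr1 (fun g : Bk F k => g J) e; rewrite /PsiF !ffunE.
have [g gK Kg] := injF_bij injP.
have PsiK : forall y J, Psi (g y) J = y J.
  by move=> y J; have := congr1 (fun h : Bk F k => h J) (Kg y); rewrite ffunE.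
symmetry; apply: ole_anti.
- case E: (dH_B (PsiBarInv Cs)) => [m|] //.
  have [c [/andP [cC cne0] wc]] := min_over_Some E.
  have [i ci] : exists i, c i != 0.
    apply/existsP; apply: contraR cne0 => /existsPn H; apply/eqP/ffunP => i.
    by rewrite ffun0E; apply/eqP; move: (H i); rewrite negbK.
  have [J cJ] : exists J, Psi (c i) J != 0.
    apply/existsP; apply: contraR ci => /existsPn H; apply/eqP/Psi_inj => J.
    by rewrite Psi0; apply/eqP; move: (H J); rewrite negbK.
  set v := \row_(i0 < n) Psi (c i0) J.
  have vC : v \in Cs J by move: cC; rewrite inE => /forallP /(_ J).
  have vne0 : v != 0 by apply: contraNneq cJ => /rowP /(_ i); rewrite !mxE => ->.
  have [m' [Em' le']] := @min_over_lb _ [pred v : 'rV[F]_n | (v \in Cs J) && (v != 0)] (@wtF F n) v (introT andP (conj vC vne0)).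
  apply: (@ole_trans _ _ _ (big_omin_le _ J)).
  rewrite /dH_F Em' /= -wc.
  apply: leq_trans le' _; apply: subset_leq_card; apply/subsetP => i0.
  rewrite !inE mxE; apply: contraNN => /eqP ->; by rewrite Psi0.
- have := big_omin_attained (fun J => dH_F (Cs J)).
  case/orP => [/eqP -> | /existsP [J /eqP EJ]]; first by case: (dH_B (PsiBarInv Cs)).
  rewrite EJ; case E2: (dH_F _) => [m|]; last by case: (dH_B (PsiBarInv Cs)).
  have [v [/andP [vC vne0] wv]] := min_over_Some E2.
  pose c : BkVec F k n := [ffun i => g [ffun J' => if J' == J then v ord0 i else 0]].
  have Pc : forall i J', Psi (c i) J' = if J' == J then v ord0 i else 0.
    by move=> i J'; rewrite ffunE PsiK ffunE.
  have [i vi] : exists i, v ord0 i != 0.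
    apply/existsP; apply: contraR vne0 => /existsPn H; apply/eqP/rowP => i.
    by rewrite mxE; apply/eqP; move: (H i); rewrite negbK.
  have cC : c \in PsiBarInv Cs.
    rewrite inE; apply/forallP => J'.
    have -> : \row_(i0 < n) Psi (c i0) J' = if J' == J then v else 0.
      apply/rowP => i0; rewrite mxE Pc; case: eqP => _; first by rewrite (ord1 ord0).
      by rewrite mxE.
    by case: eqP => [-> | _]; [exact: vC | exact: mem0v].
  have cne0 : c != 0.
    apply: contraNneq vi => c0; move: (Pc i J); rewrite c0 ffun0E Psi0 eqxx.
    by move=> <-.
  have [m' [Em' le']] := @min_over_lb _ [pred c : BkVec F k n | (c \in PsiBarInv Cs) && (c != 0)] (@wtB F k n) c (introT andP (conj cC cne0)).
  rewrite /dH_B Em' /= -wv.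
  apply: leq_trans le' _; apply: subset_leq_card; apply/subsetP => i0.
  rewrite !inE; apply: contraNN => /eqP v0.
  apply/eqP/Psi_inj => J'; rewrite Pc Psi0 v0; by case: eqP.
Qed.
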